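(* Let $a,b>0$, $0<c<1$, $0<p<1$, and consider, with the fear parameter $q>0$ as bifurcation parameter, $$\frac{dx}{dt}=x\left[\frac{(1-x)(x-p)}{1+qy}-ay\right],\qquad \frac{dy}{dt}=by\,(1-y-cx).$$ Let $$q_*=\frac{a^2c^2+2acp+2ac+p^2-4a-2p+1}{4a(c^2p-cp-c+1)},$$ and assume $q_*>0$ and $2A_1+A_2>0$ at $q=q_*$, where $A_1=ac^2q+1$, $A_2=-(2acq+ac+p+1)$. Let $E_{3*}=(x_3,1-cx_3)$ with $x_3=-A_2/(2A_1)$ evaluated at $q=q_*$. Then the system undergoes a saddle-node bifurcation at $E_{3*}$ at the threshold $q=q_{SN}=q_*$ (the transversality conditions of Sotomayor's theorem for a saddle-node bifurcation hold).
   Context: At $q=q_*$ the discriminant $\Delta=A_2^2-4A_1A_3$ (with $A_3=a+aq+p$) vanishes, so the two interior equilibria $E_{1*},E_{2*}$ coalesce into $E_{3*}$. *)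

(* Defs.v *)
From Stdlib Require Import Reals.
From Coquelicot Require Import Coquelicot.
Open Scope R_scope.

Definition fx (a p : R) (q x y : R) : R :=
  x * ((1 - x) * (x - p) / (1 + q * y) - a * y).
Definition fy (b c : R) (q x y : R) : R :=
  b * y * (1 - y - c * x).

Section Soto.
Variables (f1 f2 : R -> R -> R -> R).

Definition J11 mu0 x0 y0 := Derive (fun x => f1 mu0 x y0) x0.
Definition J12 mu0 x0 y0 := Derive (fun y => f1 mu0 x0 y) y0.
Definition J21 mu0 x0 y0 := Derive (fun x => f2 mu0 x y0) x0.
Definition J22 mu0 x0 y0 := Derive (fun y => f2 mu0 x0 y) y0.

(* Second directional derivative D^2 f_i (x0,y0,mu0)(v,v) *)
Definition D2dir (f : R -> R -> R -> R) mu0 x0 y0 v1 v2 :=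
  Derive_n (fun t => f mu0 (x0 + t * v1) (y0 + t * v2)) 2 0.

(* Sotomayor's conditions for a saddle-node bifurcation of the family
   at the point (x0,y0) and parameter value mu0:
   (i)   (x0,y0) is an equilibrium at mu0;
   (ii)  the Jacobian A has 0 as a simple eigenvalue, i.e. 0 is a simple
         root of its characteristic polynomial  l^2 - tr(A) l + det(A)
         (det A = 0 and tr A <> 0), with right eigenvector v <> 0
         (A v = 0) and left eigenvector w <> 0 (w^T A = 0);
   (iii) w^T f_mu (x0,y0,mu0) <> 0;
   (iv)  w^T D^2 f (x0,y0,mu0)(v,v) <> 0.
   The derivatives involved are required to exist. *)
Definition sotomayor_saddle_node (mu0 x0 y0 : R) : Prop :=
  f1 mu0 x0 y0 = 0 /\ f2 mu0 x0 y0 = 0 /\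
  ex_derive (fun x => f1 mu0 x y0) x0 /\ ex_derive (fun y => f1 mu0 x0 y) y0 /\
  ex_derive (fun x => f2 mu0 x y0) x0 /\ ex_derive (fun y => f2 mu0 x0 y) y0 /\
  ex_derive (fun mu => f1 mu x0 y0) mu0 /\ ex_derive (fun mu => f2 mu x0 y0) mu0 /\
  J11 mu0 x0 y0 * J22 mu0 x0 y0 - J12 mu0 x0 y0 * J21 mu0 x0 y0 = 0 /\
  J11 mu0 x0 y0 + J22 mu0 x0 y0 <> 0 /\
  exists v1 v2 w1 w2 : R,
    (v1 <> 0 \/ v2 <> 0) /\ (w1 <> 0 \/ w2 <> 0) /\
    J11 mu0 x0 y0 * v1 + J12 mu0 x0 y0 * v2 = 0 /\
    J21 mu0 x0 y0 * v1 + J22 mu0 x0 y0 * v2 = 0 /\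
    w1 * J11 mu0 x0 y0 + w2 * J21 mu0 x0 y0 = 0 /\
    w1 * J12 mu0 x0 y0 + w2 * J22 mu0 x0 y0 = 0 /\
    w1 * Derive (fun mu => f1 mu x0 y0) mu0
      + w2 * Derive (fun mu => f2 mu x0 y0) mu0 <> 0 /\
    ex_derive_n (fun t => f1 mu0 (x0 + t * v1) (y0 + t * v2)) 2 0 /\
    ex_derive_n (fun t => f2 mu0 (x0 + t * v1) (y0 + t * v2)) 2 0 /\
    w1 * D2dir f1 mu0 x0 y0 v1 v2 + w2 * D2dir f2 mu0 x0 y0 v1 v2 <> 0.
End Soto.

Definition qstar (a c p : R) : R :=
  (a^2 * c^2 + 2 * a * c * p + 2 * a * c + p^2 - 4 * a - 2 * p + 1)
  / (4 * a * (c^2 * p - c * p - c + 1)).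
Definition cA1 (a c q : R) : R := a * c^2 * q + 1.
Definition cA2 (a c p q : R) : R := - (2 * a * c * q + a * c + p + 1).
Definition cA3 (a p q : R) : R := a + a * q + p.
Definition x3 (a c p : R) : R :=
  - cA2 a c p (qstar a c p) / (2 * cA1 a c (qstar a c p)).

(* Main.v *)
Require Import Defs.
From Stdlib Require Import Reals Lra Psatz.
From Coquelicot Require Import Coquelicot.
Open Scope R_scope.

Ltac cond := repeat match goal with |- _ /\ _ => split end; try exact I; try assumption; try lra; try (intro; nra).

Lemma second_deriv (F F1 : R -> R) (l eps : R) : 0 < eps ->
  (forall t, Rabs t < eps -> is_derive F t (F1 t)) -> is_derive F1 0 l ->
  ex_derive_n F 2 0 /\ Derive_n F 2 0 = l.
Proof.
  intros He HF HF1.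
  assert (Hloc : locally 0 (fun t => F1 t = Derive F t)).
  { exists (mkposreal eps He). intros t Ht.
    change (Rabs (t - 0) < eps) in Ht. rewrite Rminus_0_r in Ht.
    symmetry. apply is_derive_unique. apply HF; exact Ht. }
  split.
  - change (ex_derive (Derive F) 0).
    apply (ex_derive_ext_loc F1). exact Hloc. eexists; exact HF1.
  - change (Derive (Derive F) 0 = l).
    rewrite <- (Derive_ext_loc F1). apply is_derive_unique; exact HF1.
    exact Hloc.
Qed.

Lemma core (a b c p q x y : R) : 0 < a -> 0 < b -> 0 < c -> c < 1 -> 0 < p -> p < 1 ->
  0 < q -> 0 < x -> x < 1 -> y = 1 - c * x ->
  -(2*a*c*q + a*c + p + 1) + 2*(a*c^2*q+1)*x = 0 ->
  a + a*q + p - (a*c^2*q+1)*x^2 = 0 ->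
  sotomayor_saddle_node (fx a p) (fy b c) q x y.
Proof.
  intros Ha Hb Hc Hc1 Hp Hp1 Hq Hx Hx1 Hy HA2 HA3.
  assert (Hcx : c*x < c*1) by (apply Rmult_lt_compat_l; lra).
  assert (Hy0 : 0 < y) by (rewrite Hy; lra).
  assert (HD : 0 < 1 + q*y) by nra.
  assert (HDn : 1 + q*y <> 0) by lra.
  assert (Nrel : (1-x)*(x-p) - a*y*(1+q*y) = 0).
  { rewrite Hy.
    transitivity (-(x*(-(2*a*c*q + a*c + p + 1) + 2*(a*c^2*q+1)*x)
                  + (a + a*q + p - (a*c^2*q+1)*x^2))); [ring|].
    rewrite HA2, HA3; ring. }
  assert (HayD : 0 < a*y*(1+q*y)) by (apply Rmult_lt_0_compat; [apply Rmult_lt_0_compat|]; lra).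
  assert (HN : 0 < (1-x)*(x-p)) by lra.
  set (gy := -((1-x)*(x-p)*q/(1+q*y)^2 + a)).
  assert (Hgy : gy < 0).
  { unfold gy. assert (0 < (1-x)*(x-p)*q/(1+q*y)^2).
    { apply Rdiv_lt_0_compat; nra. } lra. }
  assert (Hgx : (1+p-2*x)/(1+q*y) = c*gy).
  { unfold gy.
    assert (HNe : (1-x)*(x-p) = a*y*(1+q*y)) by lra.
    rewrite HNe.
    apply Rminus_diag_uniq.
    transitivity ((-(2*a*c*q + a*c + p + 1) + 2*(a*c^2*q+1)*x) * (-1) / (1+q*y)).
    { rewrite Hy in HDn |- *. field. exact HDn. }
    rewrite HA2. field. exact HDn. }
  assert (DJ11 : Derive (fun x0 => fx a p q x0 y) x = x*((1+p-2*x)/(1+q*y))).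
  { apply is_derive_unique. unfold fx. auto_derive; [cond|].
    apply Rminus_diag_uniq.
    transitivity (((1-x)*(x-p) - a*y*(1+q*y))/(1+q*y)); [field; exact HDn|].
    rewrite Nrel. field. exact HDn. }
  assert (DJ12 : Derive (fun y0 => fx a p q x y0) y = x*gy).
  { apply is_derive_unique. unfold fx, gy. auto_derive; [cond|].
    field. exact HDn. }
  assert (DJ21 : Derive (fun x0 => fy b c q x0 y) x = -(b*c*y)).
  { apply is_derive_unique. unfold fy. auto_derive; [cond|]. ring. }
  assert (DJ22 : Derive (fun y0 => fy b c q x y0) y = -(b*y)).
  { apply is_derive_unique. unfold fy. auto_derive; [cond|]. rewrite Hy. ring. }
  assert (DQ1 : Derive (fun mu => fx a p mu x y) q = x*(-((1-x)*(x-p)*y/(1+q*y)^2))).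
  { apply is_derive_unique. unfold fx. auto_derive; [cond|].
    field. exact HDn. }
  assert (DQ2 : Derive (fun mu => fy b c mu x y) q = 0).
  { apply is_derive_unique. unfold fy. auto_derive; [cond|]. ring. }
  set (A1 := a*c^2*q+1).
  assert (HA1 : 0 < A1) by (unfold A1; nra).
  assert (HD2 : ex_derive_n (fun t => fx a p q (x + t*1) (y + t*(-c))) 2 0 /\
     Derive_n (fun t => fx a p q (x + t*1) (y + t*(-c))) 2 0 = -(2*A1*x)/(1+q*y)).
  { set (eps := (1+q*y)/(2*(q*c))).
    assert (Heps : 0 < eps) by (unfold eps; apply Rdiv_lt_0_compat; nra).
    assert (Heq : q*c*eps = (1+q*y)/2) by (unfold eps; field; nra).
    assert (Hden : forall t, Rabs t < eps -> 0 < 1 + q*y - q*c*t).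
    { intros t Ht. apply Rabs_def2 in Ht. destruct Ht. nra. }
    set (G := fun t => -A1 * t^2 * (x+t) / (1+q*y-q*c*t)).
    set (G1 := fun t => -A1 * ((2*t*(x+t) + t^2)*(1+q*y-q*c*t) + t^2*(x+t)*(q*c))
                        / (1+q*y-q*c*t)^2).
    assert (Hloc : locally 0 (fun t => G t = fx a p q (x + t*1) (y + t*(-c)))).
    { exists (mkposreal eps Heps). intros t Ht.
      change (Rabs (t - 0) < eps) in Ht. rewrite Rminus_0_r in Ht.
      specialize (Hden t Ht).
      assert (HP : (1-(x+t))*((x+t)-p) - a*(y-c*t)*(1+q*(y-c*t)) = -(A1*t^2)).
      { rewrite Hy. unfold A1.
        transitivity (-((a*c^2*q+1)*t^2
           + (t+x)*(-(2*a*c*q + a*c + p + 1) + 2*(a*c^2*q+1)*x)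
           + (a + a*q + p - (a*c^2*q+1)*x^2))); [ring|].
        rewrite HA2, HA3; ring. }
      unfold G, fx.
      transitivity ((x+t)*(((1-(x+t))*((x+t)-p) - a*(y-c*t)*(1+q*(y-c*t)))
                    /(1+q*y-q*c*t))).
      - rewrite HP. field; cond.
      - field; cond. }
    destruct (second_deriv G G1 (-(2*A1*x)/(1+q*y)) eps Heps) as [E1 E2].
    { intros t Ht. specialize (Hden t Ht). unfold G, G1. auto_derive.
      - cond.
      - field; cond. }
    { unfold G1. auto_derive.
      - cond.
      - field; cond. }
    split.
    - apply (ex_derive_n_ext_loc G). exact Hloc. exact E1.
    - rewrite <- (Derive_n_ext_loc G). exact E2. exact Hloc. }
  assert (HD2' : ex_derive_n (fun t => fy b c q (x + t*1) (y + t*(-c))) 2 0 /\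
     Derive_n (fun t => fy b c q (x + t*1) (y + t*(-c))) 2 0 = 0).
  { apply (second_deriv _ (fun _ => 0) 0 1). lra.
    - intros t _. unfold fy. auto_derive; [cond|]. rewrite Hy. ring.
    - auto_derive; [cond|]. ring. }
  destruct HD2 as [HE1 HV1]. destruct HD2' as [HE2 HV2].
  unfold sotomayor_saddle_node, J11, J12, J21, J22, D2dir.
  rewrite DJ11, DJ12, DJ21, DJ22, DQ1, DQ2, Hgx.
  assert (HND : (1-x)*(x-p)/(1+q*y) = a*y).
  { apply Rminus_diag_uniq.
    transitivity (((1-x)*(x-p) - a*y*(1+q*y))/(1+q*y)); [field; exact HDn|].
    rewrite Nrel. field. exact HDn. }
  assert (HPq : 0 < (1-x)*(x-p)*y/(1+q*y)^2) by (apply Rdiv_lt_0_compat; nra).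
  assert (HQ : 0 < 2*A1*x/(1+q*y)) by (apply Rdiv_lt_0_compat; nra).
  repeat match goal with |- _ /\ _ => split end.
  - unfold fx. rewrite HND. ring.
  - unfold fy. rewrite Hy. ring.
  - unfold fx. auto_derive; cond.
  - unfold fx. auto_derive; cond.
  - unfold fy. auto_derive; cond.
  - unfold fy. auto_derive; cond.
  - unfold fx. auto_derive; cond.
  - unfold fy. auto_derive; cond.
  - ring.
  - assert (0 < x*(c*(-gy))) by (apply Rmult_lt_0_compat; [lra| apply Rmult_lt_0_compat; lra]).
    assert (0 < b*y) by (apply Rmult_lt_0_compat; lra). lra.
  - exists 1, (-c), (b*y), (x*gy). rewrite HV1, HV2.
    repeat match goal with |- _ /\ _ => split end.
    + left; lra.
    + left; nra.
    + ring.
    + rewrite Hy; ring.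
    + ring.
    + ring.
    + assert (0 < b*y*(x*((1-x)*(x-p)*y/(1+q*y)^2))) by
        (apply Rmult_lt_0_compat; [apply Rmult_lt_0_compat; lra | apply Rmult_lt_0_compat; lra]). lra.
    + exact HE1.
    + exact HE2.
    + replace (-(2*A1*x)/(1+q*y)) with (-(2*A1*x/(1+q*y))) by (field; exact HDn).
      assert (0 < b*y*(2*A1*x/(1+q*y))) by (apply Rmult_lt_0_compat; [apply Rmult_lt_0_compat; lra | lra]). lra.
Qed.

Theorem theorem5p2 (a b c p : R) :
  0 < a -> 0 < b -> 0 < c < 1 -> 0 < p < 1 ->
  0 < qstar a c p ->
  0 < 2 * cA1 a c (qstar a c p) + cA2 a c p (qstar a c p) ->
  sotomayor_saddle_node (fx a p) (fy b c)
    (qstar a c p) (x3 a c p) (1 - c * x3 a c p).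
Proof.
  intros Ha Hb [Hc Hc1] [Hp Hp1] Hq H2.
  assert (Hfac : 0 < c^2*p - c*p - c + 1).
  { replace (c^2*p - c*p - c + 1) with ((1-c)*(1-c*p)) by ring.
    assert (c*p < c*1) by (apply Rmult_lt_compat_l; lra).
    apply Rmult_lt_0_compat; lra. }
  assert (Hden : 0 < 4*a*(c^2*p - c*p - c + 1)) by (apply Rmult_lt_0_compat; lra).
  assert (Hqe : qstar a c p * (4*a*(c^2*p - c*p - c + 1)) =
     a^2 * c^2 + 2 * a * c * p + 2 * a * c + p^2 - 4 * a - 2 * p + 1).
  { unfold qstar. field; cond. }
  unfold x3. unfold x3 in *.
  set (q := qstar a c p) in *.
  unfold cA1, cA2 in *.
  assert (Hacq : 0 < a*c^2*q) by (apply Rmult_lt_0_compat; [apply Rmult_lt_0_compat; [lra| apply pow_lt; lra]| lra]).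
  assert (HA1 : 0 < a*c^2*q+1) by lra.
  assert (Hacq2 : 0 < a*c*q) by (apply Rmult_lt_0_compat; [apply Rmult_lt_0_compat; lra| lra]).
  assert (Hac : 0 < a*c) by (apply Rmult_lt_0_compat; lra).
  set (x := - - (2 * a * c * q + a * c + p + 1) / (2 * (a * c ^ 2 * q + 1))).
  assert (Hx2 : x * (2*(a*c^2*q+1)) = 2 * a * c * q + a * c + p + 1)
    by (unfold x; field; lra).
  apply (core a b c p q x (1 - c*x)); try lra.
  - destruct (Rle_lt_dec x 0) as [Hle|Hlt]; [|exact Hlt].
    exfalso. assert (x * (2*(a*c^2*q+1)) <= 0) by (apply Rmult_le_0_r; lra). lra.
  - destruct (Rle_lt_dec 1 x) as [Hle|Hlt]; [|exact Hlt].
    exfalso. assert (1 * (2*(a*c^2*q+1)) <= x * (2*(a*c^2*q+1))) by (apply Rmult_le_compat_r; lra). lra.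
  - transitivity ((4*(a*c^2*q+1)*(a+a*q+p) - (2 * a * c * q + a * c + p + 1)^2)
                  / (4*(a*c^2*q+1))).
    { unfold x. field. lra. }
    replace (4*(a*c^2*q+1)*(a+a*q+p) - (2 * a * c * q + a * c + p + 1)^2)
      with (q * (4*a*(c^2*p - c*p - c + 1)) -
            (a^2 * c^2 + 2 * a * c * p + 2 * a * c + p^2 - 4 * a - 2 * p + 1))
      by ring.
    rewrite Hqe. field. lra.
Qed.
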